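(* Let $(R,+,\cdot)$ be a finite simple additively idempotent semiring with $|R|>2$. Then there exists a finite idempotent irreducible $R$-semimodule.
   Context: A semiring is a nonempty set with a commutative semigroup operation $+$ and a semigroup operation $\cdot$ satisfying both distributive laws; simple if its only congruences are the identity and the full relation; additively idempotent if $r+r=r$ for all $r$. An $R$-semimodule is a commutative semigroup $(M,+)$ with an action $R\times M\to M$ satisfying $r(sx)=(rs)x$, $(r+s)x=rx+sx$, $r(x+y)=rx+ry$; it is idempotent if $x+x=x$. A subsemimodule is a subsemigroup closed under the action; a semimodule congruence is an equivalence compatible with $+$ and the action. $M$ is quasitrivial if $rx=sx$ for all $r,s,x$; id-quasitrivial if $rx=x$ for all $r,x$. $M$ is sub-irreducible if it is not quasitrivial and all proper subsemimodules are id-quasitrivial; quotient-irreducible if not quasitrivial and its only congruences are the identity and $M\times M$; irreducible if both. *)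

(* Defs.v *)
From mathcomp Require Import all_boot.
Set Implicit Arguments. Unset Strict Implicit. Unset Printing Implicit Defensive.

Definition is_semiring (R : Type) (add mul : R -> R -> R) : Prop :=
  inhabited R /\
  (forall a b c, add a (add b c) = add (add a b) c) /\
  (forall a b, add a b = add b a) /\
  (forall a b c, mul a (mul b c) = mul (mul a b) c) /\
  (forall a b c, mul a (add b c) = add (mul a b) (mul a c)) /\
  (forall a b c, mul (add a b) c = add (mul a c) (mul b c)).

Definition is_equivalence (T : Type) (E : T -> T -> Prop) : Prop :=
  (forall x, E x x) /\ (forall x y, E x y -> E y x) /\
  (forall x y z, E x y -> E y z -> E x z).

Definition semiring_congruence (R : Type) (add mul : R -> R -> R)
  (E : R -> R -> Prop) : Prop :=
  is_equivalence E /\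
  (forall a a' b b', E a a' -> E b b' -> E (add a b) (add a' b')) /\
  (forall a a' b b', E a a' -> E b b' -> E (mul a b) (mul a' b')).

Definition simple_semiring (R : Type) (add mul : R -> R -> R) : Prop :=
  forall E, semiring_congruence add mul E ->
    (forall x y, E x y <-> x = y) \/ (forall x y, E x y).

Definition add_idempotent (R : Type) (add : R -> R -> R) : Prop :=
  forall r, add r r = r.

Definition is_semimodule (R M : Type) (add mul : R -> R -> R)
  (addM : M -> M -> M) (act : R -> M -> M) : Prop :=
  (forall x y z, addM x (addM y z) = addM (addM x y) z) /\
  (forall x y, addM x y = addM y x) /\
  (forall r s x, act r (act s x) = act (mul r s) x) /\
  (forall r s x, act (add r s) x = addM (act r x) (act s x)) /\
  (forall r x y, act r (addM x y) = addM (act r x) (act r y)).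

Definition idempotent_semimodule (M : Type) (addM : M -> M -> M) : Prop :=
  forall x, addM x x = x.

Definition quasitrivial (R M : Type) (act : R -> M -> M) : Prop :=
  forall r s x, act r x = act s x.

Definition subsemimodule (R M : Type) (addM : M -> M -> M) (act : R -> M -> M)
  (S : M -> Prop) : Prop :=
  (exists x, S x) /\
  (forall x y, S x -> S y -> S (addM x y)) /\
  (forall r x, S x -> S (act r x)).

(* the subsemimodule S (with the induced action) is id-quasitrivial *)
Definition id_quasitrivial_on (R M : Type) (act : R -> M -> M)
  (S : M -> Prop) : Prop :=
  forall r x, S x -> act r x = x.

Definition sub_irreducible (R M : Type) (addM : M -> M -> M)
  (act : R -> M -> M) : Prop :=
  ~ quasitrivial act /\
  forall S, subsemimodule addM act S -> (exists x, ~ S x) ->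
    id_quasitrivial_on act S.

Definition semimodule_congruence (R M : Type) (addM : M -> M -> M)
  (act : R -> M -> M) (E : M -> M -> Prop) : Prop :=
  is_equivalence E /\
  (forall x x' y y', E x x' -> E y y' -> E (addM x y) (addM x' y')) /\
  (forall r x x', E x x' -> E (act r x) (act r x')).

Definition quotient_irreducible (R M : Type) (addM : M -> M -> M)
  (act : R -> M -> M) : Prop :=
  ~ quasitrivial act /\
  forall E, semimodule_congruence addM act E ->
    (forall x y, E x y <-> x = y) \/ (forall x y, E x y).

Definition irreducible_semimodule (R M : Type) (addM : M -> M -> M)
  (act : R -> M -> M) : Prop :=
  sub_irreducible addM act /\ quotient_irreducible addM act.

(* Main.v *)
Require Import Defs.
From mathcomp Require Import all_boot.
From Stdlib Require Import Classical ClassicalEpsilon.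
Set Implicit Arguments. Unset Strict Implicit. Unset Printing Implicit Defensive.

Lemma three (R : finType) : 2 < #|R| -> exists x y z : R, [/\ x <> y, x <> z & y <> z].
Proof.
rewrite cardE. have := enum_uniq R.
case: (enum R) => [|x [|y [|z t]]] //= /and4P [].
rewrite !inE !negb_or => /and3P [/eqP h1 /eqP h2 _] /andP [/eqP h3 _] _ _ _.
by exists x, y, z.
Qed.

Lemma le_add (T : Type) (add : T -> T -> T) :
  (forall a b c, add a (add b c) = add (add a b) c) ->
  (forall a b, add a b = add b a) -> (forall r, add r r = r) ->
  forall a b c, add (add a b) c = c <-> add a c = c /\ add b c = c.
Proof.
move=> aA aC aI a b c; split.
- move=> h; split.
  + have e : add a c = add a (add (add a b) c) by rewrite h.
    by rewrite e !aA aI h.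
  + have e : add b c = add b (add (add a b) c) by rewrite h.
    by rewrite e !aA [add b a]aC -[add (add a b) b]aA aI h.
- by case=> h1 h2; rewrite -aA h2 h1.
Qed.

Definition Ec (T : Type) (add : T -> T -> T) (c a b : T) : Prop :=
  (add a c = c <-> add b c = c).

Lemma degE (R : finType) (add mul : R -> R -> R) :
  is_semiring add mul -> simple_semiring add mul -> add_idempotent add -> 2 < #|R| ->
  (forall c a a' b b', Ec add c a a' -> Ec add c b b' -> Ec add c (mul a b) (mul a' b')) ->
  False.
Proof.
move=> [_ [aA [aC _]]] Hs aI H3 Hm.
have cong c : semiring_congruence add mul (Ec add c).
  split; first by rewrite /Ec; split; [|split]; intuition.
  split; last by apply: Hm.
  move=> a a' b b' h1 h2; rewrite /Ec !le_add //; rewrite /Ec in h1 h2; intuition.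
have [x [y [z [xy xz yz]]]] := three H3.
have full u v w : u <> v -> u <> w -> v <> w -> forall p q, Ec add u p q.
  move=> uv uw vw; case: (Hs _ (cong u)) => [hid|//].
  have nv : ~ add v u = u.
    move=> h; apply: uv; apply/(hid _ _).1 => /=; rewrite /Ec h aI; tauto.
  have nw : ~ add w u = u.
    move=> h; apply: uw; apply/(hid _ _).1 => /=; rewrite /Ec h aI; tauto.
  exfalso; apply: vw; apply/(hid _ _).1; rewrite /Ec; tauto.
have h1 : add y x = x by apply/(full x y z xy xz yz y x); rewrite aI.
have h2 : add x y = y.
  by apply/(full y x z (nesym xy) yz xz x y); rewrite aI.
case: xy; by rewrite -[x in x = _]h1 -[y in _ = y]h2 aC.
Qed.

Lemma D2 (R : finType) (add mul : R -> R -> R) :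
  is_semiring add mul -> simple_semiring add mul -> add_idempotent add -> 2 < #|R| ->
  (forall r s, mul r s = r) -> False.
Proof.
move=> HR Hs aI H3 h; apply: (degE HR Hs aI H3) => c a a' b b' e1 e2.
by rewrite !h.
Qed.

Lemma D1 (R : finType) (add mul : R -> R -> R) :
  is_semiring add mul -> simple_semiring add mul -> add_idempotent add -> 2 < #|R| ->
  (forall r t s, mul r s = mul t s) -> False.
Proof.
move=> HR Hs aI H3 h.
have HR' := HR; move: HR' => [_ [aA [aC [mA [mDl mDr]]]]].
pose g a := mul a a.
have hg r a : mul r a = g a by apply: h.
have cong : semiring_congruence add mul (fun a b => g a = g b).
  split; first by split; [|split]; congruence.
  split=> a a' b b' e1 e2.
  - by rewrite -!(hg a) !mDl !hg e1 e2.
  - by rewrite -(hg a (mul a b)) -(hg a' (mul a' b')) !mA !hg e2.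
case: (Hs _ cong) => [hid|hfull].
- have gg a : g a = a.
    apply/(hid _ _).1; rewrite -{1}(hg a (g a)) /g mA; exact: hg.
  apply: (degE HR Hs aI H3) => c a a' b b' e1 e2.
  by rewrite !hg !gg.
- apply: (degE HR Hs aI H3) => c a a' b b' e1 e2.
  by rewrite !hg (hfull b b').
Qed.

Definition HminP (R M : finType) (add mul : R -> R -> R) : Prop :=
  forall (M' : finType) (addM' : M' -> M' -> M') (act' : R -> M' -> M'),
     #|M'| < #|M| -> is_semimodule add mul addM' act' -> idempotent_semimodule addM' ->
     quasitrivial act'.

Lemma subquot (R M : finType) add mul (addM : M -> M -> M) (act : R -> M -> M)
  (D : pred M) (f : M -> M) :
  is_semimodule add mul addM act -> idempotent_semimodule addM ->
  HminP M add mul ->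
  (forall x y, D x -> D y -> D (addM x y)) ->
  (forall r x, D x -> D (act r x)) ->
  (forall x, D x -> D (f x)) ->
  (forall x, D x -> f (f x) = f x) ->
  (forall a b, D a -> D b -> f (addM (f a) b) = f (addM a b)) ->
  (forall r a, D a -> f (act r (f a)) = f (act r a)) ->
  (exists x, ~~ (D x && (f x == x))) ->
  forall r s x, D x -> f x = x -> f (act r x) = f (act s x).
Proof.
move=> [mA [mC [aM [aA aD]]]] mI Hmin DA DR Df ff fL fR [x0 nx0] r s x Dx fx.
pose P := [pred x | D x && (f x == x)].
have Pf v : D v -> P (f v) by move=> Dv; rewrite /= Df // ff // eqxx.
pose T := {x : M | P x}.
have PT (a : T) : D (val a) /\ f (val a) = val a.
  by case: a => v /= /andP [? /eqP ?].
pose addT (a b : T) : T := insubd a (f (addM (val a) (val b))).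
pose actT (q : R) (a : T) : T := insubd a (f (act q (val a))).
have vA a b : val (addT a b) = f (addM (val a) (val b)).
  by rewrite insubdK //; apply: Pf; apply: DA; [exact: (PT a).1|exact: (PT b).1].
have vR q a : val (actT q a) = f (act q (val a)).
  by rewrite insubdK //; apply: Pf; apply: DR; exact: (PT a).1.
have fL' a b : D a -> D b -> f (addM a (f b)) = f (addM a b).
  by move=> Da Db; rewrite mC fL // mC.
have qT : quasitrivial actT.
  apply: (Hmin _ addT actT).
  - rewrite card_sig.
    have := cardC P; have : 0 < #|[predC P]|.
      by apply/card_gt0P; exists x0; rewrite !inE.
    move=> h1 h2; rewrite /=. 
    have -> : #|[pred x | P x]| = #|P| by apply: eq_card.
    by rewrite -h2 -[X in X < _]addn0 ltn_add2l.
  - split; [|split; [|split; [|split]]].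
    + move=> a b c; apply: val_inj. rewrite !vA.
      have [Da _] := PT a; have [Db _] := PT b; have [Dc _] := PT c.
      by rewrite (fL' _ _ Da (DA _ _ Db Dc)) (fL _ _ (DA _ _ Da Db) Dc) mA.
    + by move=> a b; apply: val_inj; rewrite !vA mC.
    + move=> p q a; apply: val_inj; rewrite !vR.
      have [Da _] := PT a.
      by rewrite (fR _ _ (DR _ _ Da)) aM.
    + move=> p q a; apply: val_inj; rewrite !vA !vR.
      have [Da _] := PT a.
      by rewrite aA -(fL _ _ (DR p _ Da) (DR q _ Da)) -(fL' _ _ (Df _ (DR p _ Da)) (DR q _ Da)).
    + move=> p a b; apply: val_inj; rewrite !vA !vR !vA.
      have [Da _] := PT a; have [Db _] := PT b.
      by rewrite (fR _ _ (DA _ _ Da Db)) aD -(fL _ _ (DR p _ Da) (DR p _ Db)) -(fL' _ _ (Df _ (DR p _ Da)) (DR p _ Db)).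
  - move=> a; apply: val_inj; rewrite vA mI.
    exact: (PT a).2.
have Px : P x by rewrite /= Dx fx eqxx.
have := qT r s (exist _ x Px).
by move/(congr1 val); rewrite !vR.
Qed.

Lemma subquotK (R M : finType) add mul (addM : M -> M -> M) (act : R -> M -> M)
  (D : pred M) (f : M -> M) (G : Prop) :
  ((forall r s x, D x -> f x = x -> f (act r x) = f (act s x)) -> G) ->
  is_semimodule add mul addM act -> idempotent_semimodule addM ->
  HminP M add mul ->
  (forall x y, D x -> D y -> D (addM x y)) ->
  (forall r x, D x -> D (act r x)) ->
  (forall x, D x -> D (f x)) ->
  (forall x, D x -> f (f x) = f x) ->
  (forall a b, D a -> D b -> f (addM (f a) b) = f (addM a b)) ->
  (forall r a, D a -> f (act r (f a)) = f (act r a)) ->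
  (exists x, ~~ (D x && (f x == x))) -> G.
Proof.
move=> k h1 h2 h3 h4 h5 h6 h7 h8 h9 h10; apply: k; exact: subquot h1 h2 h3 h4 h5 h6 h7 h8 h9 h10.
Qed.

Definition pb (P : Prop) : bool := if excluded_middle_informative P then true else false.
Lemma pbP (P : Prop) : reflect P (pb P).
Proof. by rewrite /pb; case: excluded_middle_informative => h; constructor. Qed.

Inductive inRM (R M : Type) (addM : M -> M -> M) (act : R -> M -> M) : M -> Prop :=
| inRM_act r y : inRM addM act (act r y)
| inRM_add a b : inRM addM act a -> inRM addM act b -> inRM addM act (addM a b).

Lemma min_irred (R : finType) add mul (M : finType) (addM : M -> M -> M) (act : R -> M -> M) :
  is_semiring add mul -> simple_semiring add mul -> add_idempotent add -> 2 < #|R| ->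
  is_semimodule add mul addM act -> idempotent_semimodule addM -> ~ quasitrivial act ->
  HminP M add mul -> irreducible_semimodule addM act.
Proof.
move=> HR Hs aI H3 HM mI nq Hmin.
have HM' := HM; move: HM' => [mA [mC [aM [aA aD]]]].
have F r s : (forall x, act r x = act s x) -> r = s.
  move=> h.
  have cong : semiring_congruence add mul (fun r s => forall x, act r x = act s x).
    split; first by split; [|split]; congruence.
    split=> a a' b b' e1 e2 x; first by rewrite !aA e1 e2.
    by rewrite -!aM e2 e1.
  case: (Hs _ cong) => [hid|hfull]; first exact/(hid r s).1.
  by case: nq => p q x; apply: hfull.
have allRM x : inRM addM act x.
  apply: NNPP => nx.
  apply: (@subquotK R M add mul addM act (fun x => pb (inRM addM act x)) id _ _ HM mI Hmin).
  - move=> q; apply: (D1 HR Hs aI H3) => r t s; apply: F => y.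
    rewrite -!aM; apply: q => //; apply/pbP; apply: inRM_act.
  - by move=> a b /pbP ha /pbP hb; apply/pbP; apply: inRM_add.
  - by move=> r a _; apply/pbP; apply: inRM_act.
  - by [].
  - by [].
  - by [].
  - by [].
  - by exists x; apply/negP => /andP [/pbP].
have Q E : semimodule_congruence addM act E ->
    (forall x y, E x y <-> x = y) \/ (forall x y, E x y).
  move=> [[Er [Es Et]] [EA ER]].
  case: (classic (forall x y, E x y)) => [|nfull]; [by right|left].
  move=> x y; split; last by move=> ->.
  move=> exy; apply: NNPP => nxy.
  pose rep z := odflt z [pick w | pb (E z w)].
  have Erep z : E z (rep z).
    rewrite /rep; case: pickP => [w /pbP //|h].
    by move: (h z) => /pbP [].
  have repE a b : E a b -> rep a = rep b.
    move=> eab.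
    have ep : (fun w => pb (E a w)) =1 (fun w => pb (E b w)).
      move=> w; apply/pbP/pbP => h; [apply: Et (Es _ _ eab) h|apply: Et eab h].
    rewrite /rep (eq_pick ep); case: pickP => [w _ //|h].
    by move: (h b) => /pbP [].
  have Erep2 a b : rep a = rep b -> E a b.
    move=> e; apply: Et (Erep a) _; rewrite e; exact: Es.
  apply: (@subquotK R M add mul addM act predT rep _ _ HM mI Hmin); cycle 1.
  - by [].
  - by [].
  - by [].
  - by move=> z _; apply/esym/repE.
  - by move=> a b _ _; apply: repE; apply: EA => //; apply: Es.
  - by move=> r a _; apply: repE; apply: ER; apply: Es.
  - case: (altP (rep x =P x)) => hx; last by exists x; rewrite /= hx.
    case: (altP (rep y =P y)) => hy; last by exists y; rewrite /= hy.
    by case: nxy; rewrite -hx -hy; apply: repE.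
  move=> qt.
  have Eq r s z : E (act r z) (act s z).
    eapply Et; first exact: (ER r _ _ (Erep z)).
    eapply Et; last exact: (Es _ _ (ER s _ _ (Erep z))).
    apply: Erep2; apply: qt => //.
    by apply/esym/repE.
  have Ex r z : E (act r z) z.
    elim: (allRM z) => [t w|a b _ ha _ hb].
    + by rewrite aM; apply: Eq.
    + by rewrite aD; apply: EA.
  have [u [v nuv]] : exists u v, ~ E u v.
    apply: NNPP => h; apply: nfull => u v; apply: NNPP => h'; apply: h; by exists u, v.
  case: nq => r s z.
  apply: (@subquotK R M add mul addM act (fun w => pb (E w z)) id _ _ HM mI Hmin); cycle 1.
  - by move=> a b /pbP ha /pbP hb; apply/pbP; rewrite -(mI z); apply: EA.
  - by move=> q a /pbP ha; apply/pbP; apply: Et (Ex q a) ha.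
  - by [].
  - by [].
  - by [].
  - by [].
  - case: (classic (E u z)) => hu; last by exists u; apply/negP => /andP [/pbP].
    case: (classic (E v z)) => hv; last by exists v; apply/negP => /andP [/pbP].
    by case: nuv; apply: Et hu (Es _ _ hv).
  move=> h; apply: h => //; apply/pbP; exact: Er.
have K x y : (forall r, act r x = act r y) -> x = y.
  move=> h.
  have cong : semimodule_congruence addM act (fun x y => forall r, act r x = act r y).
    split; first by split; [|split]; congruence.
    split; first by move=> a a' b b' e1 e2 r; rewrite !aD e1 e2.
    by move=> s a a' e r; rewrite !aM.
  case: (Q _ cong) => [hid|hfull]; first exact/(hid x y).1.
  exfalso; apply: (D2 HR Hs aI H3) => r s; apply: F => z.
  by rewrite -aM; apply: hfull.
split; split => //.
move=> S [[s0 Ss0] [SA SR]] [x nSx].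
apply: (@subquotK R M add mul addM act (fun w => pb (S w)) id _ _ HM mI Hmin); cycle 1.
- by move=> a b /pbP ha /pbP hb; apply/pbP; apply: SA.
- by move=> q a /pbP ha; apply/pbP; apply: SR.
- by [].
- by [].
- by [].
- by [].
- by exists x; apply/negP => /andP [/pbP].
move=> qs r y Sy; apply: K => t.
rewrite aM; apply: qs => //; exact/pbP.
Qed.

Lemma ind_main (R : finType) (add mul : R -> R -> R) :
  is_semiring add mul -> simple_semiring add mul -> add_idempotent add -> 2 < #|R| ->
  forall n (M : finType) (addM : M -> M -> M) (act : R -> M -> M), #|M| <= n ->
  is_semimodule add mul addM act -> idempotent_semimodule addM -> ~ quasitrivial act ->
  exists (M : finType) (addM : M -> M -> M) (act : R -> M -> M),
    is_semimodule add mul addM act /\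
    idempotent_semimodule addM /\
    irreducible_semimodule addM act.
Proof.
move=> HR Hs aI H3; elim=> [|n IH] M addM act hn HM mI nq.
  case: nq => r s x; exfalso; move: hn; rewrite leqn0 => /eqP/card0_eq/(_ x).
  by rewrite inE.
case: (classic (exists (M' : finType) (addM' : M' -> M' -> M') (act' : R -> M' -> M'),
     #|M'| < #|M| /\ is_semimodule add mul addM' act' /\ idempotent_semimodule addM' /\
     ~ quasitrivial act')).
- move=> [M' [addM' [act' [lt [h1 [h2 h3]]]]]].
  apply: (IH M' addM' act') => //.
  by rewrite -ltnS; apply: leq_trans hn.
- move=> none; exists M, addM, act; split => //; split => //.
  apply: (min_irred HR Hs aI H3) => // M' addM' act' lt h1 h2.
  apply: NNPP => h3; apply: none; by exists M', addM', act'.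
Qed.

Theorem proposition2p17 (R : finType) (add mul : R -> R -> R) :
  is_semiring add mul ->
  simple_semiring add mul ->
  add_idempotent add ->
  2 < #|R| ->
  exists (M : finType) (addM : M -> M -> M) (act : R -> M -> M),
    is_semimodule add mul addM act /\
    idempotent_semimodule addM /\
    irreducible_semimodule addM act.
Proof.
move=> HR Hs aI H3.
have HR' := HR; move: HR' => [_ [aA [aC [mA [mDl mDr]]]]].
apply: (ind_main HR Hs aI H3 (leqnn #|R|)).
- split; first exact: aA.
  split; first exact: aC.
  split; first exact: mA.
  split; first exact: mDr.
  exact: mDl.
- move=> r; exact: aI.
- by move=> q; apply: (D1 HR Hs aI H3) => r t s; apply: q.
Qed.
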